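(* Let $E$ be a countable Borel equivalence relation on a standard Borel space $X$ induced by a Borel action of a countable group $\Gamma$. If $\mathcal C_0,\mathcal C_1,\dots$ are countably many clubs of good Polish topologies on $X$, then $\bigcap_i\mathcal C_i$ is a club.
   Context: A Polish topology on $X$ is good if it generates the Borel structure of $X$ and makes the $\Gamma$-action continuous. A class $\mathcal C$ of good Polish topologies is a club if (cofinal) every good Polish topology is contained in some member of $\mathcal C$, and (closed) whenever $\tau_0\subseteq\tau_1\subseteq\cdots$ all lie in $\mathcal C$, the topology generated by $\bigcup_i\tau_i$ lies in $\mathcal C$. *)

(* Defs.v *)
From Stdlib Require Import Reals.
Open Scope R_scope.

Definition subfam {X : Type} (F H : (X -> Prop) -> Prop) : Prop :=
  forall A, F A -> H A.

Definition is_topology {X : Type} (tau : (X -> Prop) -> Prop) : Prop :=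
  tau (fun _ => True) /\
  (forall F : (X -> Prop) -> Prop, subfam F tau ->
     tau (fun x => exists A, F A /\ A x)) /\
  (forall A B, tau A -> tau B -> tau (fun x => A x /\ B x)).

Definition generated_topology {X : Type} (F : (X -> Prop) -> Prop) : (X -> Prop) -> Prop :=
  fun A => forall tau, is_topology tau -> subfam F tau -> tau A.

Definition is_metric {X : Type} (d : X -> X -> R) : Prop :=
  (forall x y, 0 <= d x y) /\
  (forall x y, d x y = 0 <-> x = y) /\
  (forall x y, d x y = d y x) /\
  (forall x y z, d x z <= d x y + d y z).

Definition metric_open {X : Type} (d : X -> X -> R) (A : X -> Prop) : Prop :=
  forall x, A x -> exists eps, 0 < eps /\ forall y, d x y < eps -> A y.

Definition metric_complete {X : Type} (d : X -> X -> R) : Prop :=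
  forall u : nat -> X,
    (forall eps, 0 < eps -> exists N, forall m n, (N <= m)%nat -> (N <= n)%nat -> d (u m) (u n) < eps) ->
    exists x, forall eps, 0 < eps -> exists N, forall n, (N <= n)%nat -> d (u n) x < eps.

Definition countable_set {X : Type} (D : X -> Prop) : Prop :=
  exists f : X -> nat, forall x y, D x -> D y -> f x = f y -> x = y.

Definition separable {X : Type} (tau : (X -> Prop) -> Prop) : Prop :=
  exists D : X -> Prop, countable_set D /\
    forall U, tau U -> (exists x, U x) -> exists x, D x /\ U x.

Definition polish {X : Type} (tau : (X -> Prop) -> Prop) : Prop :=
  is_topology tau /\ separable tau /\
  exists d : X -> X -> R, is_metric d /\ metric_complete d /\
    (forall A, tau A <-> metric_open d A).

Definition is_sigma_algebra {X : Type} (S : (X -> Prop) -> Prop) : Prop :=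
  S (fun _ => True) /\
  (forall A, S A -> S (fun x => ~ A x)) /\
  (forall A : nat -> X -> Prop, (forall n, S (A n)) -> S (fun x => exists n, A n x)).

Definition sigma_generated {X : Type} (F : (X -> Prop) -> Prop) : (X -> Prop) -> Prop :=
  fun A => forall S, is_sigma_algebra S -> subfam F S -> S A.

Definition standard_borel {X : Type} (B : (X -> Prop) -> Prop) : Prop :=
  is_sigma_algebra B /\
  exists tau, polish tau /\ forall A, B A <-> sigma_generated tau A.

Definition is_group {G : Type} (mul : G -> G -> G) (one : G) (inv : G -> G) : Prop :=
  (forall a b c, mul a (mul b c) = mul (mul a b) c) /\
  (forall a, mul one a = a /\ mul a one = a) /\
  (forall a, mul (inv a) a = one /\ mul a (inv a) = one).

Definition countable_type (G : Type) : Prop :=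
  exists f : G -> nat, forall a b, f a = f b -> a = b.

Definition is_action {G X : Type} (mul : G -> G -> G) (one : G) (act : G -> X -> X) : Prop :=
  (forall x, act one x = x) /\ (forall g h x, act (mul g h) x = act g (act h x)).

Definition borel_action {G X : Type} (B : (X -> Prop) -> Prop) (act : G -> X -> X) : Prop :=
  forall g A, B A -> B (fun x => A (act g x)).

Definition continuous_wrt {X : Type} (tau : (X -> Prop) -> Prop) (f : X -> X) : Prop :=
  forall U, tau U -> tau (fun x => U (f x)).

Definition good {G X : Type} (B : (X -> Prop) -> Prop) (act : G -> X -> X)
  (tau : (X -> Prop) -> Prop) : Prop :=
  polish tau /\ (forall A, sigma_generated tau A <-> B A) /\
  (forall g, continuous_wrt tau (act g)).

Definition club {G X : Type} (B : (X -> Prop) -> Prop) (act : G -> X -> X)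
  (C : ((X -> Prop) -> Prop) -> Prop) : Prop :=
  (forall tau, C tau -> good B act tau) /\
  (forall tau, good B act tau -> exists tau', C tau' /\ subfam tau tau') /\
  (forall t : nat -> (X -> Prop) -> Prop,
     (forall i, C (t i)) -> (forall i, subfam (t i) (t (S i))) ->
     C (generated_topology (fun A => exists i, t i A))).

(* Main.v *)
Require Import Defs.
From Stdlib Require Import Reals.
Local Open Scope nat_scope.
From Stdlib Require Import Arith Lia Cantor ClassicalEpsilon FunctionalExtensionality PropExtensionality.

Lemma to_nat_mono_y x y : Cantor.to_nat (x, y) <= Cantor.to_nat (x, S y).
Proof.
  pose proof (to_nat_spec x y). pose proof (to_nat_spec x (S y)). nia.
Qed.

Lemma chain_mono {X : Type} (t : nat -> (X -> Prop) -> Prop)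
  (ht : forall n, subfam (t n) (t (S n))) : forall a b, a <= b -> subfam (t a) (t b).
Proof.
  intros a b Hab. induction Hab.
  - intros A H; exact H.
  - intros A H. apply ht. apply IHHab. exact H.
Qed.

Theorem lemma3p4
  (X : Type) (B : (X -> Prop) -> Prop) (hX : standard_borel B)
  (G : Type) (mul : G -> G -> G) (one : G) (inv : G -> G)
  (hG : is_group mul one inv) (hGc : countable_type G)
  (act : G -> X -> X) (hact : is_action mul one act) (hbor : borel_action B act)
  (E : X -> X -> Prop) (hE : forall x y, E x y <-> exists g, act g x = y)
  (C : nat -> ((X -> Prop) -> Prop) -> Prop)
  (hC : forall i, club B act (C i)) :
  club B act (fun tau => forall i, C i tau).
Proof.
  split; [|split].
  - intros tau H. exact (proj1 (hC 0) tau (H 0)).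
  - intros tau Htau.
    set (F := fun i (s : (X -> Prop) -> Prop) =>
              epsilon (inhabits s) (fun s' => C i s' /\ subfam s s')).
    assert (HF : forall i s, good B act s -> C i (F i s) /\ subfam s (F i s)).
    { intros i s Hs. unfold F. apply epsilon_spec.
      exact (proj1 (proj2 (hC i)) s Hs). }
    set (k := fun n => fst (Cantor.of_nat n)).
    set (t := fix t n := match n with 0 => tau | S m => F (k m) (t m) end).
    assert (Hgood : forall n, good B act (t n)).
    { induction n; simpl. exact Htau.
      apply (proj1 (hC (k n))). apply HF. exact IHn. }
    assert (Hinc : forall n, subfam (t n) (t (S n))).
    { intros n. simpl. apply HF. apply Hgood. }
    exists (generated_topology (fun A => exists n, t n A)). split.
    + intros i.
      set (s := fun m => t (S (Cantor.to_nat (i, m)))).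
      assert (Hs : forall m, C i (s m)).
      { intros m. unfold s. simpl.
        assert (k (Cantor.to_nat (i, m)) = i) as Hk.
        { unfold k. rewrite cancel_of_to. reflexivity. }
        change (C i (F (k (Cantor.to_nat (i, m))) (t (Cantor.to_nat (i, m))))).
        rewrite Hk. apply HF. apply Hgood. }
      assert (Hsinc : forall m, subfam (s m) (s (S m))).
      { intros m. unfold s. apply chain_mono; auto.
        pose proof (to_nat_mono_y i m). lia. }
      pose proof (proj2 (proj2 (hC i)) s Hs Hsinc) as Hgen.
      replace (fun A => exists n, t n A) with (fun A => exists m, s m A).
      exact Hgen.
      apply functional_extensionality; intros A.
      apply propositional_extensionality; split.
      * intros [m Hm]. exists (S (Cantor.to_nat (i, m))). exact Hm.
      * intros [n Hn]. exists n. unfold s.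
        apply (chain_mono t Hinc n); auto.
        pose proof (to_nat_non_decreasing i n). lia.
    + intros A HA tau' Htop Hsub. apply Hsub. exists 0. exact HA.
  - intros t Ht Hinc i. apply (proj2 (proj2 (hC i))).
    + intros j. apply Ht.
    + exact Hinc.
Qed.
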